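(* For every $g\in G(\Gamma)$ and every $d\ge1$, the $d$-tail of $g$ contains at most $d\kappa$ syllables, where $\kappa$ is the maximal number of pairwise adjacent vertices of $\Gamma$.
   Context: $G(\Gamma)$ is the graph product of groups $\{G_v\}_{v\in\Gamma}$ over a finite simplicial graph $\Gamma$. Reduced words are words $(g_1,\dots,g_n)$, $g_i\in G_{v_i}$, that cannot be shortened by swapping consecutive syllables from adjacent vertex groups, merging consecutive syllables from the same vertex group, or deleting identity syllables; reduced words for the same element differ by such swaps. The $d$-tail of $g$ is the set of syllables of $g$ which occur among the last $d$ syllables of some reduced word representing $g$. *)

(* Defs.v *)
From Stdlib Require Import Relations List.
From HB Require Import structures.
From mathcomp Require Import all_boot.
Set Implicit Arguments. Unset Strict Implicit. Unset Printing Implicit Defensive.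

Record grp := Grp {
  gcar :> Type;
  gmul : gcar -> gcar -> gcar;
  gone : gcar;
  ginv : gcar -> gcar;
  gmulA : forall x y z, gmul x (gmul y z) = gmul (gmul x y) z;
  gmul1l : forall x, gmul gone x = x;
  gmul1r : forall x, gmul x gone = x;
  gmulVl : forall x, gmul (ginv x) x = gone;
  gmulVr : forall x, gmul x (ginv x) = gone }.

Section GraphProduct.
Variables (V : finType) (adj : rel V) (G : V -> grp).

Definition syll := {v : V & G v}.

Inductive wstep : seq syll -> seq syll -> Prop :=
| wswap (a b : seq syll) (x y : syll) :
    adj (projT1 x) (projT1 y) -> wstep (a ++ x :: y :: b) (a ++ y :: x :: b)
| wmerge (a b : seq syll) (v : V) (g h : G v) :
    wstep (a ++ existT _ v g :: existT _ v h :: b)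
          (a ++ existT _ v (gmul g h) :: b)
| wdelete (a b : seq syll) (v : V) :
    wstep (a ++ existT _ v (gone (G v)) :: b) (a ++ b).

(* Two words represent the same element of G(Gamma). *)
Definition wequiv : relation (seq syll) := clos_refl_sym_trans _ wstep.

Definition reduced (w : seq syll) : Prop :=
  forall w', clos_refl_trans _ wstep w w' -> size w <= size w'.

Definition in_tail (d : nat) (w : seq syll) (s : syll) : Prop :=
  exists u, reduced u /\ wequiv u w /\ List.In s (drop (size u - d) u).

End GraphProduct.

Definition is_clique (V : finType) (adj : rel V) (S : {set V}) : bool :=
  [forall x in S, forall y in S, (x != y) ==> adj x y].

Definition clique_number (V : finType) (adj : rel V) : nat :=
  \max_(S : {set V} | is_clique adj S) #|S|.

(* Main.v *)
Require Import Defs.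
From Stdlib Require Import Relations List Classical ClassicalEpsilon Eqdep_dec.
From HB Require Import structures.
From mathcomp Require Import all_boot zify.
Set Implicit Arguments. Unset Strict Implicit. Unset Printing Implicit Defensive.

Lemma perm_sw2 (T : eqType) (x y : T) b : perm_eq [:: x, y & b] [:: y, x & b].
Proof. by rewrite (perm_catCA [:: x] [:: y] b). Qed.

Section Height.
Variables (T : eqType) (I : rel T).
Hypothesis Isym : symmetric I.

Fixpoint hf (L : seq T) (x : T) : nat :=
  match L with
  | [::] => 0
  | z :: L' => if x == z then (\max_(y <- [seq y <- L' | ~~ I z y]) hf L' y).+1
               else hf L' x
  end.

Lemma hf_cons z L' x : hf (z :: L') x =
  if x == z then (\max_(y <- [seq y <- L' | ~~ I z y]) hf L' y).+1 else hf L' x.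
Proof. by []. Qed.
Lemma hf_nil x : hf [::] x = 0. Proof. by []. Qed.
Arguments hf : simpl never.

Definition lsw (L L' : seq T) : Prop :=
  exists a b x y, I x y /\ L = a ++ x :: y :: b /\ L' = a ++ y :: x :: b.

Lemma lsw_perm L L' : lsw L L' -> perm_eq L L'.
Proof.
case=> [a [b [x [y [_ [-> ->]]]]]].
by rewrite perm_cat2l perm_sw2.
Qed.

Lemma hf_lsw_base x y b t : I x y -> uniq (x :: y :: b) ->
  hf (x :: y :: b) t = hf (y :: x :: b) t.
Proof.
move=> Ixy /= /and3P [].
rewrite inE negb_or => /andP [nxy nxb] nyb _.
have Ht: forall z c, z \notin c -> forall s : seq T, {subset s <= c} ->
   \max_(y0 <- s) hf (z :: c) y0 = \max_(y0 <- s) hf c y0.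
  move=> z c zc s sub; apply: eq_big_seq => y0 /sub y0c.
  rewrite hf_cons; case: (eqVneq y0 z) => // E; by rewrite -E y0c in zc.
have nyx : y != x by rewrite eq_sym.
case: (eqVneq t x) => [->|tx].
  rewrite !hf_cons eqxx (negbTE nxy) /= Ixy /=.
  congr S; apply: Ht => // y0; rewrite mem_filter => /andP [].
  done.
case: (eqVneq t y) => [->|ty].
  rewrite !hf_cons (negbTE nyx) eqxx /= (Isym y x) Ixy /=.
  congr S; symmetry; apply: Ht => // y0; rewrite mem_filter => /andP [].
  done.
by rewrite !hf_cons (negbTE tx) (negbTE ty).
Qed.

Lemma hf_lsw L L' t : lsw L L' -> uniq L -> hf L t = hf L' t.
Proof.
case=> [a [b [x [y [Ixy [-> ->]]]]]].
elim: a t => [|z a IH] t; first by move=> U; exact: hf_lsw_base.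
move=> /= /andP [za U].
rewrite [LHS]hf_cons [RHS]hf_cons; case: (t == z); last exact: IH.
congr S.
rewrite (@perm_big _ _ _ _ [seq y0 <- a ++ [:: x, y & b] | ~~ I z y0]
                          [seq y0 <- a ++ [:: y, x & b] | ~~ I z y0]); last first.
  by apply: perm_filter; rewrite perm_cat2l perm_sw2.
by apply: eq_big_seq => y0 _; apply: IH.
Qed.

Definition lrt := clos_refl_trans _ lsw.

Lemma lrt_perm L L' : lrt L L' -> perm_eq L L'.
Proof.
elim=> [? ? /lsw_perm //| ? | ? ? ? _ H1 _ H2]; first by [].
exact: perm_trans H1 H2.
Qed.

Lemma hf_lrt L L' t : lrt L L' -> uniq L -> hf L t = hf L' t.
Proof.
move=> H; elim: H t => [? ? H t U| ? t _ | x y z Hxy IH1 Hyz IH2 t U].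
- exact: hf_lsw.
- by [].
- rewrite IH1 // IH2 //; by rewrite -(perm_uniq (lrt_perm Hxy)).
Qed.

Lemma hf_le L x : hf L x <= size L - index x L.
Proof.
elim: L x => [|z L IH] x; first by rewrite hf_nil.
rewrite hf_cons /= (eq_sym z x); case: (x == z).
  rewrite subn0 ltnS; apply/bigmax_leqP_seq => y _ _.
  apply: leq_trans (IH y) _; exact: leq_subr.
by rewrite subSS.
Qed.

Lemma hf_pos L x : x \in L -> 0 < hf L x.
Proof.
elim: L => [|z L IH] //; rewrite inE hf_cons.
by case: (x == z) => //= /IH.
Qed.

Lemma index_drop (L : seq T) (x : T) k : uniq L -> x \in drop k L -> k <= index x L.
Proof.
move=> U Hx.
have E := cat_take_drop k L.
have Hk : k <= size L.
  rewrite leqNgt; apply/negP => Hlt; move: Hx; rewrite drop_oversize //; exact: ltnW.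
have nx : x \notin take k L.
  move: U; rewrite -{1}E cat_uniq => /and3P [_ /hasPn H _].
  by apply/negP => xt; move: (H x Hx); rewrite xt.
rewrite -{1}E index_cat (negbTE nx) size_take.
case: ltnP => _; [exact: leq_addr | exact: leq_trans Hk (leq_addr _ _)].
Qed.

Lemma hf_tail (L : seq T) (x : T) d : uniq L -> x \in drop (size L - d) L -> hf L x <= d.
Proof.
move=> U H; have := index_drop U H; have := hf_le L x; move=> h1 h2; apply: leq_trans h1 _; rewrite leq_subLR addnC -leq_subLR; exact: h2.
Qed.

Lemma hf_neq (L : seq T) (x y : T) : uniq L -> x \in L -> y \in L -> x != y -> ~~ I x y ->
  hf L x != hf L y.
Proof.
elim: L => [|z L IH] //= /andP [zL U].
rewrite !inE !hf_cons => Hx Hy nxy nI.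
case: (eqVneq x z) => [Exz|xz]; case: (eqVneq y z) => [Eyz|yz].
- by rewrite Exz Eyz eqxx in nxy.
- rewrite (negbTE yz) /= in Hy; subst z.
  have: hf L y <= \max_(y0 <- [seq y0 <- L | ~~ I x y0]) hf L y0.
    rewrite big_filter; exact: (@leq_bigmax_seq _ _ _ _ y).
  rewrite neq_ltn => H; apply/orP; right; rewrite ltnS //.
- rewrite (negbTE xz) /= in Hx; subst z.
  have: hf L x <= \max_(y0 <- [seq y0 <- L | ~~ I y y0]) hf L y0.
    rewrite big_filter; apply: (@leq_bigmax_seq _ _ _ _ x) => //.
    by rewrite Isym.
  rewrite neq_ltn => H; apply/orP; left; rewrite ltnS //.
- by apply: IH; rewrite //; [move: Hx | move: Hy]; rewrite ?(negbTE xz) ?(negbTE yz).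
Qed.

End Height.

Lemma count_split (h : nat -> nat) s d :
  count (fun i => 0 < h i <= d.+1) s = count (fun i => 0 < h i <= d) s + count (fun i => h i == d.+1) s.
Proof.
elim: s => //= x s ->; case: (h x) => [|n] /=; first by rewrite !add0n.
rewrite ltnS eqSS; case: (ltngtP n d) => H /=; lia.
Qed.

Lemma size_length (T : Type) (s : seq T) : size s = length s.
Proof. by elim: s => //= x s ->. Qed.

Lemma In_map (T1 T2 : Type) (f : T1 -> T2) s y :
  List.In y (map f s) -> exists x, y = f x /\ List.In x s.
Proof.
elim: s => [|x s IH] //= [<-|/IH [x0 [-> H]]]; first by exists x; split => //; left.
by exists x0; split => //; right.
Qed.

Lemma In_map_f (T1 T2 : Type) (f : T1 -> T2) s x :
  List.In x s -> List.In (f x) (map f s).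
Proof. elim: s => [|y s IH] //= [->|/IH]; tauto. Qed.

Lemma In_mem (T : eqType) (x : T) s : List.In x s -> x \in s.
Proof. elim: s => [|y s IH] //= [->|/IH H]; rewrite inE; [by rewrite eqxx | by rewrite H orbT]. Qed.

Lemma mem_In (T : eqType) (x : T) s : x \in s -> List.In x s.
Proof. elim: s => [|y s IH] //=; rewrite inE => /orP [/eqP ->|/IH]; tauto. Qed.

Lemma map_split4 (T1 T2 : Type) (f : T1 -> T2) L c a b d :
  map f L = c ++ a :: b :: d ->
  exists c1 i j d1, L = c1 ++ i :: j :: d1 /\ map f c1 = c /\ f i = a /\ f j = b /\ map f d1 = d.
Proof.
elim: c L => [|e c IH] [|x L] //=.
  case: L => [|y L] /=; first by case.
  by case=> <- <- <-; exists [::], x, y, L.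
case=> <- /IH [c1 [i [j [d1 [-> [E1 [E2 [E3 E4]]]]]]]].
by exists (x :: c1), i, j, d1; rewrite /= E1.
Qed.
Lemma split4 (T : Type) (c d z1 z2 : seq T) (a b x : T) :
  c ++ a :: b :: d = z1 ++ x :: z2 ->
  (exists c', z1 = c ++ a :: b :: c' /\ d = c' ++ x :: z2) \/
  (z1 = rcons c a /\ x = b /\ z2 = d) \/
  (z1 = c /\ x = a /\ z2 = b :: d) \/
  (exists c', c = z1 ++ x :: c' /\ z2 = c' ++ a :: b :: d).
Proof.
elim: c z1 => [|e c IH] z1 /=.
  case: z1 => [|y [|y' z1]] /= [] => [-> ->|-> -> ->|-> -> ->].
  - by right; right; left.
  - by right; left.
  - by left; exists z1.
case: z1 => [|y z1] /= [] => [<- <-|-> /IH].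
  by right; right; right; exists c.
case=> [[c' [-> ->]]|[[-> [-> ->]]|[[-> [-> ->]]|[c' [-> ->]]]]].
- by left; exists c'.
- by right; left.
- by right; right; left.
- by right; right; right; exists c'.
Qed.

Lemma In_split (T : Type) (x : T) s : List.In x s -> exists p q, s = p ++ x :: q.
Proof.
elim: s => [|y s IH] //= [->|/IH [p [q ->]]]; first by exists [::], s.
by exists (y :: p), q.
Qed.

Section NF.
Variables (V : finType) (adj : rel V) (G : V -> grp).
Hypotheses (adj_sym : symmetric adj) (adj_irr : irreflexive adj).

Local Notation syl := (syll G).
Definition mk (v : V) (g : G v) : syl := existT _ v g.
Arguments mk : clear implicits.

Lemma mk_inj v g h : mk v g = mk v h -> g = h.
Proof. apply: inj_pair2_eq_dec => x y; exact: (decP (x =P y)). Qed.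

Lemma mk_eq v w g h : mk v g = mk w h -> v = w.
Proof. by move=> /(f_equal (@projT1 _ _)). Qed.

Definition sw (u u' : seq syl) := exists a b x y,
  adj (projT1 x) (projT1 y) /\ u = a ++ x :: y :: b /\ u' = a ++ y :: x :: b.
Definition eqv := clos_refl_trans _ sw.

Lemma sw_sym u u' : sw u u' -> sw u' u.
Proof.
case=> [a [b [x [y [H [-> ->]]]]]]; exists a, b, y, x; split => //.
by rewrite adj_sym.
Qed.

Lemma eqv_refl u : eqv u u. Proof. exact: rt_refl. Qed.
Lemma eqv_trans u v w : eqv u v -> eqv v w -> eqv u w. Proof. exact: rt_trans. Qed.
Lemma eqv_sym u v : eqv u v -> eqv v u.
Proof.
elim=> [x y /sw_sym H|x|x y z _ H1 _ H2]; [exact: rt_step|exact: rt_refl|].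
exact: rt_trans H2 H1.
Qed.
Lemma sw_eqv u v : sw u v -> eqv u v. Proof. exact: rt_step. Qed.

Lemma eqv_catl p u u' : eqv u u' -> eqv (p ++ u) (p ++ u').
Proof.
elim=> [x y|x|x y z _ H1 _ H2]; [|exact: rt_refl|exact: rt_trans H1 H2].
case=> [a [b [x0 [y0 [H [-> ->]]]]]]; apply: rt_step.
by exists (p ++ a), b, x0, y0; rewrite !catA.
Qed.

Lemma eqv_catr q u u' : eqv u u' -> eqv (u ++ q) (u' ++ q).
Proof.
elim=> [x y|x|x y z _ H1 _ H2]; [|exact: rt_refl|exact: rt_trans H1 H2].
case=> [a [b [x0 [y0 [H [-> ->]]]]]]; apply: rt_step.
by exists a, (b ++ q), x0, y0; rewrite -!catA.
Qed.

Lemma eqv_cons x u u' : eqv u u' -> eqv (x :: u) (x :: u').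
Proof. exact: (eqv_catl [:: x]). Qed.

Lemma sw_here x y b : adj (projT1 x) (projT1 y) -> eqv (x :: y :: b) (y :: x :: b).
Proof. by move=> H; apply: rt_step; exists [::], b, x, y. Qed.

Lemma eqv_size u u' : eqv u u' -> size u = size u'.
Proof.
elim=> [x y|x|x y z _ H1 _ H2] //; last by rewrite H1.
by case=> [a [b [x0 [y0 [H [-> ->]]]]]]; rewrite !size_cat.
Qed.

Lemma In_cat (T : Type) (s : T) a b : List.In s (a ++ b) <-> List.In s a \/ List.In s b.
Proof. elim: a => [|x a IH] /=; tauto. Qed.

Lemma eqv_In u u' s : eqv u u' -> List.In s u -> List.In s u'.
Proof.
elim=> [x y|x|x y z _ H1 _ H2] //; last by move=> /H1 /H2.
case=> [a [b [x0 [y0 [H [-> ->]]]]]].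
rewrite !In_cat /=; tauto.
Qed.

Definition adjall (x : syl) (z : seq syl) := all (fun y => adj (projT1 x) (projT1 y)) z.

Lemma move_left x z1 z2 : adjall x z1 -> eqv (z1 ++ x :: z2) (x :: z1 ++ z2).
Proof.
elim: z1 => [|y z1 IH] /=; first by move=> _; exact: eqv_refl.
move=> /andP [Hy /IH H].
apply: eqv_trans (eqv_cons y H) _.
by apply: sw_here; rewrite adj_sym.
Qed.

Lemma extract x u z : eqv (x :: u) z ->
  exists z1 z2, z = z1 ++ x :: z2 /\ adjall x z1 /\ eqv u (z1 ++ z2).
Proof.
move=> /clos_rt_rtn1_iff H; elim: H => [|y z' Hs _ [z1 [z2 [E [Ha He]]]]].
  by exists [::], u; split => //; split => //; exact: eqv_refl.
case: Hs => [c [d [a [b [Hab [Ey Ez]]]]]].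
rewrite E in Ey; subst z'.
case: (split4 (esym Ey)) => [[c' [E1 E2]]|[[E1 [E2 E3]]|[[E1 [E2 E3]]|[c' [E1 E2]]]]].
- exists (c ++ b :: a :: c'), z2; split; first by rewrite E2 -catA.
  move: Ha; rewrite E1 /adjall !all_cat /= => /andP [-> /and3P [-> -> ->]].
  split => //; apply: eqv_trans He _; rewrite E1 -!catA /=.
  exact: sw_eqv (ex_intro _ c (ex_intro _ (c' ++ z2) (ex_intro _ a (ex_intro _ b (conj Hab (conj erefl erefl)))))).
- subst; exists c, (a :: d); split => //.
  move: Ha; rewrite /adjall all_rcons => /andP [_ ->]; split => //.
  by rewrite cat_rcons in He.
- subst; exists (rcons c b), d; split; first by rewrite cat_rcons.
  split; first by rewrite /adjall all_rcons Hab.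
  by rewrite cat_rcons.
- subst; exists z1, (c' ++ b :: a :: d); split; first by rewrite -catA.
  split => //; apply: eqv_trans He _.
  rewrite !catA; apply: sw_eqv; by exists (z1 ++ c'), d, a, b.
Qed.

Lemma adjall_nov v g z : adjall (mk v g) z -> forall h, ~ List.In (mk v h) z.
Proof.
elim: z => [|y z IH]; rewrite /adjall /=; first by move=> _ _ [].
move=> /andP [Hy Ha] h [E|Hin].
- by rewrite E /= adj_irr in Hy.
- exact: IH Ha h Hin.
Qed.

Lemma cancel_head v k k' r r' :
  eqv (mk v k :: r) (mk v k' :: r') -> k = k' /\ eqv r r'.
Proof.
case/extract => [[|y z1] [z2 [/= E [Ha He]]]].
  by case: E => /mk_inj -> ->.
case: E => Ey _; subst y.
by move: Ha; rewrite /adjall /= adj_irr.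
Qed.

Lemma F1 v w k m r r' : adj v w ->
  eqv (mk w m :: r) (mk v k :: r') ->
  exists r'', eqv r (mk v k :: r'') /\ eqv r' (mk w m :: r'').
Proof.
move=> Hvw /eqv_sym /extract [[|y z1] [z2 [/= E [Ha He]]]].
  by case: E => Ew; subst w; rewrite adj_irr in Hvw.
case: E => Ey Er; subst y r.
move: Ha; rewrite /adjall /= => /andP [_ Ha].
exists (z1 ++ z2); split => //; exact: move_left.
Qed.

Definition hashead v u := exists kr : G v * seq syl, eqv u (mk v kr.1 :: kr.2).

Definition oc (v : V) (g : G v) (r : seq syl) : seq syl :=
  if excluded_middle_informative (g = gone (G v)) then r else mk v g :: r.
Arguments oc : clear implicits.

Lemma oc_one v r : oc v (gone (G v)) r = r.
Proof. by rewrite /oc; case: excluded_middle_informative. Qed.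

Lemma oc_ne v g r : g <> gone (G v) -> oc v g r = mk v g :: r.
Proof. by rewrite /oc; case: excluded_middle_informative. Qed.

Lemma oc_eqv v g r r' : eqv r r' -> eqv (oc v g r) (oc v g r').
Proof. move=> H; rewrite /oc; destruct (excluded_middle_informative _) => //; exact: eqv_cons. Qed.

Definition A (s : syl) (u : seq syl) : seq syl :=
  let: existT v g := s in
  match excluded_middle_informative (hashead v u) with
  | left H => let kr := proj1_sig (constructive_indefinite_description _ H) in
              oc v (gmul g kr.1) kr.2
  | right _ => oc v g u
  end.

Lemma A_head v g u k r : eqv u (mk v k :: r) -> eqv (A (mk v g) u) (oc v (gmul g k) r).
Proof.
move=> Hu; rewrite /A /mk /=.
case: excluded_middle_informative => [H|H]; last first.
  by exfalso; apply: H; exists (k, r).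
case: (constructive_indefinite_description _ H) => [[k' r'] Hk] /=.
have [Ek Er] := cancel_head (eqv_trans (eqv_sym Hk) Hu); simpl in Ek, Er.
by rewrite Ek; apply: oc_eqv.
Qed.

Lemma A_nohead v g u : ~ hashead v u -> A (mk v g) u = oc v g u.
Proof. by move=> Hn; rewrite /A /mk /=; case: excluded_middle_informative. Qed.

Lemma A_eqv s u u' : eqv u u' -> eqv (A s u) (A s u').
Proof.
case: s => v g Hu.
case: (classic (hashead v u)) => [[[k r] H]|Hn].
  apply: eqv_trans (A_head g H) _; apply: eqv_sym; apply: A_head.
  exact: eqv_trans (eqv_sym Hu) H.
have Hn' : ~ hashead v u'.
  by case=> [[k r] H]; apply: Hn; exists (k, r); exact: eqv_trans Hu H.
change (eqv (A (mk v g) u) (A (mk v g) u')).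
by rewrite !A_nohead //; apply: oc_eqv.
Qed.


Definition I1 u := forall v, ~ List.In (mk v (gone (G v))) u.
Definition I2 u := forall p q v k k', ~ eqv u (p ++ mk v k :: mk v k' :: q).
Definition Inv u := I1 u /\ I2 u.

Lemma Inv_eqv u u' : eqv u u' -> Inv u -> Inv u'.
Proof.
move=> H [H1 H2]; split.
  by move=> v /(eqv_In (eqv_sym H)) /H1.
by move=> p q v k k' /(eqv_trans H) /H2.
Qed.

Lemma cons_pair v m r p q w a b :
  eqv (mk v m :: r) (p ++ mk w a :: mk w b :: q) ->
  (exists p' q' w' a' b', eqv r (p' ++ mk w' a' :: mk w' b' :: q')) \/
  (exists b' r', eqv r (mk v b' :: r')).
Proof.
case/extract => [z1 [z2 [E [Ha He]]]].
case: (split4 E) => [[c' [E1 E2]]|[[E1 [E2 E3]]|[[E1 [E2 E3]]|[c' [E1 E2]]]]].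
- left; exists p, (c' ++ z2), w, a, b.
  by rewrite E1 -catA in He.
- have Ew := mk_eq E2; subst w.
  by move: Ha; rewrite E1 /adjall all_rcons /= adj_irr.
- have Ew := mk_eq E2; subst w z1 z2.
  right; exists b, (p ++ q); apply: eqv_trans He _; exact: move_left.
- left; exists (z1 ++ c'), q, w, a, b.
  by rewrite E2 catA in He.
Qed.

Lemma Inv_cons v g r : g <> gone (G v) -> Inv r ->
  (forall b r', ~ eqv r (mk v b :: r')) -> Inv (mk v g :: r).
Proof.
move=> Hg [H1 H2] Hh; split.
  move=> w /= [E|Hin]; last exact: H1 Hin.
  have Ew := mk_eq E; subst w; apply: Hg; exact: mk_inj E.
move=> p q w a b /cons_pair [[p' [q' [w' [a' [b' H]]]]]|[b' [r' H]]].
  exact: H2 H.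
exact: Hh H.
Qed.

Lemma hh v u k r : eqv u (mk v k :: r) -> hashead v u.
Proof. by move=> H; exists (k, r). Qed.

Lemma Inv_A s u : Inv u -> Inv (A s u).
Proof.
case: s => v g [H1 H2].
change (Inv (A (mk v g) u)).
case: (classic (hashead v u)) => [[[k r] H]|Hn].
  apply: Inv_eqv (eqv_sym (A_head g H)) _.
  have Ir : Inv r.
    split.
      by move=> w Hin; apply: (H1 w); apply: (eqv_In (eqv_sym H)); right.
    move=> p q w a b Hr; apply: (H2 (mk v k :: p) q w a b).
    exact: eqv_trans H (eqv_cons _ Hr).
  case: (classic (gmul g k = gone (G v))) => [->|Hne]; first by rewrite oc_one.
  rewrite oc_ne //; apply: Inv_cons => // b r' Hr.
  apply: (H2 [::] r' v k b); exact: eqv_trans H (eqv_cons _ Hr).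
rewrite A_nohead //.
case: (classic (g = gone (G v))) => [->|Hne]; first by rewrite oc_one.
rewrite oc_ne //; apply: Inv_cons => // b r' Hr.
apply: Hn; exact: hh Hr.
Qed.

Lemma Inv_nil : Inv [::].
Proof.
split; first by move=> v [].
move=> p q v k k' /eqv_size; rewrite size_cat /=.
by rewrite addnS.
Qed.

Lemma L3 v u : Inv u -> eqv (A (mk v (gone (G v))) u) u.
Proof.
move=> [H1 H2].
case: (classic (hashead v u)) => [[[k r] H]|Hn]; last first.
  by rewrite A_nohead // oc_one; exact: eqv_refl.
apply: eqv_trans (A_head _ H) _; rewrite gmul1l oc_ne; first exact: eqv_sym.
move=> /= Ek; subst k; apply: (H1 v); apply: (eqv_In (eqv_sym H)); by left.
Qed.

Lemma L4 v g h u : Inv u ->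
  eqv (A (mk v g) (A (mk v h) u)) (A (mk v (gmul g h)) u).
Proof.
move=> [H1 H2].
case: (classic (hashead v u)) => [[[k r] H]|Hn].
  apply: eqv_trans (A_eqv _ (A_head h H)) _.
  apply: eqv_trans _ (eqv_sym (A_head _ H)).
  case: (classic (gmul h k = gone (G v))) => [E|Hne].
    rewrite E oc_one -gmulA E gmul1r A_nohead; first exact: eqv_refl.
    case=> [[k' r'] Hr]; apply: (H2 [::] r' v k k').
    exact: eqv_trans H (eqv_cons _ Hr).
  rewrite oc_ne //; apply: eqv_trans (A_head _ (eqv_refl _)) _.
  rewrite gmulA; exact: eqv_refl.
rewrite (A_nohead h Hn) (A_nohead _ Hn).
case: (classic (h = gone (G v))) => [->|Hne].
  by rewrite oc_one gmul1r A_nohead //; exact: eqv_refl.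
rewrite oc_ne //; exact: A_head _ (eqv_refl _).
Qed.

Lemma oc_push v g w m r : adj v w ->
  eqv (oc v g (mk w m :: r)) (mk w m :: oc v g r).
Proof.
move=> Hvw; case: (classic (g = gone (G v))) => [->|Hne].
  rewrite !oc_one; exact: eqv_refl.
rewrite !oc_ne //; exact: sw_here.
Qed.

Lemma oc_comm v g w h r : adj v w ->
  eqv (oc v g (oc w h r)) (oc w h (oc v g r)).
Proof.
move=> Hvw; case: (classic (h = gone (G w))) => [->|Hne].
  rewrite !oc_one; exact: eqv_refl.
rewrite (oc_ne _ Hne) (oc_ne _ Hne); exact: oc_push.
Qed.

Lemma nohead_oc v w h r : adj v w -> ~ hashead v r -> ~ hashead v (oc w h r).
Proof.
move=> Hvw Hn; case: (classic (h = gone (G w))) => [->|Hne]; first by rewrite oc_one.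
rewrite oc_ne // => [[[k r'] H]].
have [r'' [H' _]] := F1 Hvw H; apply: Hn; exact: hh H'.
Qed.

Lemma L5w v g w h u : adj v w -> hashead w u ->
  eqv (A (mk v g) (A (mk w h) u)) (A (mk w h) (A (mk v g) u)).
Proof.
move=> Hvw [[m r] H]; simpl in H.
have Hwv : adj w v by rewrite adj_sym.
case: (classic (hashead v r)) => [[[k r0] Hr]|Hn].
  simpl in Hr.
  have Hu : eqv u (mk v k :: mk w m :: r0).
    apply: eqv_trans H _; apply: eqv_trans (eqv_cons _ Hr) _; exact: sw_here.
  apply: eqv_trans (A_eqv _ (A_head h H)) _.
  apply: eqv_trans (A_eqv _ (oc_eqv _ Hr)) _.
  apply: eqv_trans (A_eqv _ (oc_push _ _ _ Hwv)) _.
  apply: eqv_trans (A_head _ (eqv_refl _)) _.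
  apply: eqv_trans _ (eqv_sym (A_eqv _ (A_head g Hu))).
  apply: eqv_trans _ (eqv_sym (A_eqv _ (oc_push _ _ _ Hvw))).
  apply: eqv_trans _ (eqv_sym (A_head _ (eqv_refl _))).
  exact: oc_comm.
have Hnu : ~ hashead v u.
  case=> [[k r'] Hu].
  have [r'' [Hr _]] := F1 Hvw (eqv_trans (eqv_sym H) Hu).
  apply: Hn; exact: hh Hr.
rewrite (A_nohead g Hnu).
apply: eqv_trans (A_eqv _ (A_head h H)) _.
rewrite A_nohead; last exact: nohead_oc.
apply: eqv_trans _ (eqv_sym (A_eqv _ (oc_eqv _ H))).
apply: eqv_trans _ (eqv_sym (A_eqv _ (oc_push _ _ _ Hvw))).
apply: eqv_trans _ (eqv_sym (A_head _ (eqv_refl _))).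
exact: oc_comm.
Qed.

Lemma L5 v g w h u : adj v w ->
  eqv (A (mk v g) (A (mk w h) u)) (A (mk w h) (A (mk v g) u)).
Proof.
move=> Hvw.
case: (classic (hashead w u)) => [Hw|Hnw]; first exact: L5w.
case: (classic (hashead v u)) => [Hv|Hnv].
  apply: eqv_sym; apply: L5w => //; by rewrite adj_sym.
have Hwv : adj w v by rewrite adj_sym.
rewrite (A_nohead _ Hnw) (A_nohead _ Hnv) (A_nohead _ (@nohead_oc v w h u Hvw Hnv)).
rewrite (A_nohead _ (@nohead_oc w v g u Hwv Hnw)).
exact: oc_comm.
Qed.

Definition N (w : seq syl) := foldr A [::] w.

Lemma foldr_eqv a t t' : eqv t t' -> eqv (foldr A t a) (foldr A t' a).
Proof. elim: a => [|x a IH] //= H; exact: A_eqv (IH H). Qed.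

Lemma Inv_N w : Inv (N w).
Proof. elim: w => [|x w IH] /=; [exact: Inv_nil | exact: Inv_A]. Qed.

Lemma N_cat a c : N (a ++ c) = foldr A (N c) a.
Proof. by rewrite /N foldr_cat. Qed.

Lemma N_step w w' : wstep adj w w' -> eqv (N w) (N w').
Proof.
case=> [a b x y Hxy|a b v g h|a b v]; rewrite !N_cat; apply: foldr_eqv => /=.
- case: x Hxy => v g; case: y => w0 h /= Hvw.
  exact: (L5 g h (N b) Hvw).
- exact: (L4 g h (Inv_N b)).
- exact: (L3 v (Inv_N b)).
Qed.

Lemma N_wequiv w w' : wequiv adj w w' -> eqv (N w) (N w').
Proof.
elim=> [x y /N_step //|x|x y _ /eqv_sym //|x y z _ H1 _ H2]; first exact: eqv_refl.
exact: eqv_trans H1 H2.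
Qed.

Lemma Inv_N_id u : Inv u -> eqv (N u) u.
Proof.
elim: u => [|x u IH] /=; first by move=> _; exact: eqv_refl.
case: x => v g [H1 H2].
have Iu : Inv u.
  split; first by move=> w Hin; apply: (H1 w); right.
  move=> p q w a b Hr; apply: (H2 (mk v g :: p) q w a b); exact: eqv_cons _ Hr.
apply: eqv_trans (A_eqv _ (IH Iu)) _.
change (eqv (A (mk v g) u) (mk v g :: u)).
rewrite A_nohead.
  rewrite oc_ne; first exact: eqv_refl.
  move=> Eg; subst g; apply: (H1 v); by left.
case=> [[k r] H]; apply: (H2 [::] r v g k); exact: eqv_cons _ H.
Qed.

Lemma eqv_wrt u u' : eqv u u' -> clos_refl_trans _ (@wstep _ adj G) u u'.
Proof.
elim=> [x y|x|x y z _ H1 _ H2]; [|exact: rt_refl|exact: rt_trans H1 H2].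
case=> [a [b [x0 [y0 [H [-> ->]]]]]]; apply: rt_step; exact: wswap.
Qed.

Lemma reduced_Inv u : reduced adj u -> Inv u.
Proof.
move=> R; split.
  move=> v Hin; have [p [q E]] := In_split Hin.
  have := R (p ++ q); rewrite E.
  move=> /(_ (rt_step _ _ _ _ (@wdelete _ adj G p q v))).
  by rewrite !size_cat /= addnS ltnn.
move=> p q v k k' H.
have := R (p ++ mk v (gmul k k') :: q).
move=> /(_ (rt_trans _ _ _ _ _ (eqv_wrt H) (rt_step _ _ _ _ (@wmerge _ adj G p q v k k')))).
by rewrite (eqv_size H) !size_cat /= addnS ltnn.
Qed.

Theorem normal_form u u' : reduced adj u -> reduced adj u' -> wequiv adj u u' -> eqv u u'.
Proof.
move=> R R' H.
apply: eqv_trans (eqv_sym (Inv_N_id (reduced_Inv R))) _.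
apply: eqv_trans (N_wequiv H) _.
exact: Inv_N_id (reduced_Inv R').
Qed.

End NF.

Section Tail.
Variables (V : finType) (adj : rel V) (G : V -> grp).
Hypotheses (adj_sym : symmetric adj) (adj_irr : irreflexive adj).
Local Notation syl := (syll G).

Lemma tail_bound (u0 : seq syl) (x0 : syl) (d : nat) (l : seq syl) :
  List.NoDup l ->
  (forall s, List.In s l -> exists u, eqv adj u0 u /\ List.In s (drop (size u - d) u)) ->
  size l <= d * clique_number adj.
Proof.
move=> Hl Ht.
pose f := nth x0 u0.
pose L0 := iota 0 (size u0).
pose vert i := projT1 (f i).
pose Ir : rel nat := fun i j => adj (vert i) (vert j).
have Isym : symmetric Ir by move=> i j; rewrite /Ir adj_sym.
have HL0 : map f L0 = u0 by exact: mkseq_nth.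
have UL0 : uniq L0 by exact: iota_uniq.
have lift : forall u, eqv adj (map f L0) u -> exists L', u = map f L' /\ lrt Ir L0 L'.
  move=> u /clos_rt_rtn1_iff H; elim: H => [|y z Hs _ [L' [E Hr]]].
    by exists L0; split => //; exact: rt_refl.
  case: Hs => [c [d' [a [b [Hab [Ey Ez]]]]]].
  rewrite E in Ey; have [c1 [i [j [d1 [EL [E1 [E2 [E3 E4]]]]]]]] := map_split4 Ey.
  exists (c1 ++ j :: i :: d1); split.
    by rewrite Ez map_cat /= E1 E2 E3 E4.
  apply: rt_trans Hr (rt_step _ _ _ _ _).
  exists c1, d1, i, j; split => //.
  by rewrite /Ir /vert -/f E2 E3.
pose P i := 0 < hf Ir L0 i <= d.
have Hs : forall s, List.In s l -> exists i, s = f i /\ i \in filter P L0.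
  move=> s /Ht [u [Hu Hin]].
  rewrite -HL0 in Hu; have [L' [Eu Hr]] := lift _ Hu.
  rewrite Eu size_map -map_drop in Hin.
  have [i [-> Hi]] := In_map Hin.
  exists i; split => //.
  have Hi' := In_mem Hi.
  have Hp := lrt_perm Hr.
  have UL' : uniq L' by rewrite -(perm_uniq Hp).
  have iL0 : i \in L0 by rewrite (perm_mem Hp); exact: mem_drop Hi'.
  rewrite mem_filter iL0 andbT /P (hf_pos Ir iL0) /= (hf_lrt Isym i Hr UL0).
  exact: hf_tail UL' Hi'.
have Hincl : List.incl l (map f (filter P L0)).
  move=> s /Hs [i [-> Hi]]; apply: In_map_f; exact: mem_In.
have := NoDup_incl_length Hl Hincl; rewrite -!size_length size_map size_filter.
move/leP => H; apply: leq_trans H _.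
have layer : forall k, count (fun i => hf Ir L0 i == k) L0 <= clique_number adj.
  move=> k; rewrite -size_filter.
  set Y := filter _ L0.
  have UY : uniq Y by exact: filter_uniq.
  have key : forall i j, i \in Y -> j \in Y -> i != j -> Ir i j.
    move=> i j; rewrite !mem_filter => /andP [/eqP hi iL] /andP [/eqP hj jL] nij.
    apply/negPn/negP => nI.
    by move: (hf_neq Isym UL0 iL jL nij nI); rewrite hi hj eqxx.
  have Uv : uniq (map vert Y).
    rewrite map_inj_in_uniq // => i j iY jY Ev.
    apply/eqP/negPn/negP => nij.
    by move: (key i j iY jY nij); rewrite /Ir Ev adj_irr.
  have -> : size Y = #|[set v | v \in map vert Y]|.
    by rewrite cardsE; rewrite (card_uniqP Uv) size_map.
  apply: leq_bigmax_cond.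
  apply/forallP => x; apply/implyP; rewrite inE => /mapP [i iY ->].
  apply/forallP => y; apply/implyP; rewrite inE => /mapP [j jY ->].
  apply/implyP => nv; apply: key => //.
  by apply/negP => /eqP E; rewrite E eqxx in nv.
rewrite /P; clear Hs Hincl Ht P. elim: d => [|d IH].
  by rewrite mul0n (@eq_count _ _ pred0) ?count_pred0 // => i /=; case: (hf Ir L0 i).
rewrite (count_split (hf Ir L0)).
rewrite mulSn addnC; apply: leq_add => //.
Qed.

End Tail.

Theorem mainTheorem7 (V : finType) (adj : rel V)
  (adj_sym : symmetric adj) (adj_irr : irreflexive adj)
  (G : V -> grp) (w : seq (syll G)) (d : nat) (Hd : 1 <= d)
  (l : seq (syll G)) (Hl : List.NoDup l)
  (Htail : forall s, List.In s l -> in_tail adj d w s) :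
  size l <= d * clique_number adj.
Proof.
case: l Hl Htail => [|s0 l] Hl Htail; first by [].
have [u0 [R0 [E0 _]]] := Htail s0 (or_introl erefl).
apply: (tail_bound adj_sym adj_irr (u0 := u0) s0) => // s Hs.
have [u [R [E Hin]]] := Htail s Hs.
exists u; split => //.
apply: (normal_form adj_sym adj_irr R0 R).
exact: (rst_trans _ _ _ _ _ E0 (rst_sym _ _ _ _ E)).
Qed.
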